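(* There is a universal constant $C$ such that for all positive integers $k,n$, every $\epsilon\in(0,1)$, and every integer $g$, there is a $k$-party, one-round protocol using public randomness for the Sum-Equal problem over $\mathbb{Z}$ with $n$-bit inputs relative to $g$, with error at most $\epsilon$ and total communication complexity at most $k\log(k/\epsilon)+C\cdot k$.
   Context: Model: parties $P_1,\dots,P_k$ each hold an integer input $x_i\in\{0,\dots,2^n-1\}$; a coordinator (distinct from the parties) wants to compute $f(x_1,\dots,x_k)$. In a one-round protocol with public randomness, a random string $r$ is shared by all parties and the coordinator; each party sends a single message depending only on its own input and $r$; the coordinator outputs a value depending only on the messages and $r$; there is no other communication. Error at most $\epsilon$ means that for every input the probability over $r$ of a wrong output is at most $\epsilon$. Total communication complexity is the maximum total number of bits sent. Sum-Equal over $\mathbb{Z}$ relative to $g$: $f=1$ if $\sum_i x_i=g$ and $f=0$ otherwise. $\log$ is base 2. *)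

(* Defs.v *)
From Stdlib Require Import Reals.
From mathcomp Require Import all_boot all_order all_algebra.
Set Implicit Arguments. Unset Strict Implicit. Unset Printing Implicit Defensive.

Definition log2 (x : R) : R := Rdiv (ln x) (ln 2).

(* The public random string is uniform over the finite set 'I_(rand_size.+1)
   (nonempty). *)
Record protocol (k : nat) := Protocol {
  rand_size : nat;
  msg : 'I_k -> nat -> 'I_rand_size.+1 -> seq bool;
  out : ('I_k -> seq bool) -> 'I_rand_size.+1 -> bool
}.

Definition run k (P : protocol k) (x : 'I_k -> nat) (r : 'I_(rand_size P).+1)
  : bool := @out k P (fun i => @msg k P i (x i) r) r.

Definition valid_input k (n : nat) (x : 'I_k -> nat) : Prop :=
  forall i, x i < 2 ^ n.

Definition sum_equal k (g : int) (x : 'I_k -> nat) : bool :=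
  ((\sum_(i < k) (x i)%:Z)%R == g).

Definition error_prob k (g : int) (P : protocol k) (x : 'I_k -> nat) : R :=
  Rdiv (INR #|[set r : 'I_(rand_size P).+1 | @run k P x r != @sum_equal k g x]|)
       (INR (rand_size P).+1).

Definition error_at_most k n (g : int) (P : protocol k) (eps : R) : Prop :=
  forall x, @valid_input k n x -> Rle (@error_prob k g P x) eps.

Definition total_bits k (P : protocol k) (x : 'I_k -> nat)
  (r : 'I_(rand_size P).+1) : nat :=
  \sum_(i < k) size (@msg k P i (x i) r).

Definition comm_at_most k n (P : protocol k) (B : R) : Prop :=
  forall x r, @valid_input k n x -> Rle (INR (@total_bits k P x r)) B.

(* Main.v *)
Require Import Defs.
From Stdlib Require Import Reals.
From mathcomp Require Import all_boot all_order all_algebra.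
From Stdlib Require Import Lra.
From mathcomp Require Import zify.
Set Implicit Arguments. Unset Strict Implicit. Unset Printing Implicit Defensive.
Import GRing.Theory Num.Theory.

Fixpoint enc (l q : nat) : seq bool :=
  match l with 0 => [::] | l'.+1 => odd q :: enc l' q./2 end.
Fixpoint dec (s : seq bool) : nat :=
  match s with [::] => 0 | b :: s' => b + (dec s').*2 end.
Lemma size_enc l q : size (enc l q) = l.
Proof. by elim: l q => [|l IH] q //=; rewrite IH. Qed.
Lemma dec_enc l q : q < 2 ^ l -> dec (enc l q) = q.
Proof.
elim: l q => [|l IH] q /=; first by rewrite expn0 ltnS leqn0 => /eqP.
move=> hq; rewrite IH ?odd_double_half //.
rewrite expnS in hq; rewrite -(ltn_pmul2l (isT : 0 < 2)); apply: leq_ltn_trans hq.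
by rewrite -{2}(odd_double_half q) -muln2 mulnC leq_addl.
Qed.

Definition qv (P L r x : nat) : nat := ((r * x) %% P * L) %/ P.

Definition accept (k P L : nat) (g : int) (Q r : nat) : bool :=
  [exists j : 'I_k, let z := absz (((Posz r) * g) %% (Posz P))%Z in
     (Q * P <= (z + j * P) * L) && ((z + j * P) * L < (Q + k) * P)].

Lemma qv_lt P L r x : 0 < P -> 0 < L -> qv P L r x < L.
Proof. move=> hP hL; rewrite /qv ltn_divLR // mulnC ltn_pmul2l ?ltn_pmod //. Qed.

Lemma qv_bounds P L r x : 0 < P ->
  qv P L r x * P <= (r * x) %% P * L /\ ((r * x) %% P * L).+1 <= (qv P L r x).+1 * P.
Proof. move=> hP; split; [exact: leq_divM | exact: ltn_ceil]. Qed.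

Lemma sumS k (a : 'I_k -> nat) : \sum_(i < k) (a i).+1 = \sum_(i < k) a i + k.
Proof. under eq_bigr => i _ do rewrite -addn1. by rewrite big_split /= sum1_card card_ord. Qed.

Lemma sum_bounds k P L r (x : 'I_k -> nat) : 0 < P ->
  let Y := \sum_(i < k) (r * x i) %% P in
  let Q := \sum_(i < k) qv P L r (x i) in
  Q * P <= Y * L /\ Y * L + k <= (Q + k) * P /\ Y + k <= k * P.
Proof.
move=> hP Y Q; split; [|split].
- rewrite /Q /Y !big_distrl /=; apply: leq_sum => i _.
  by case: (qv_bounds L r (x i) hP).
- have -> : Y * L + k = \sum_(i < k) ((r * x i) %% P * L).+1.
    by rewrite /Y big_distrl /= sumS.
  have -> : (Q + k) * P = \sum_(i < k) (qv P L r (x i)).+1 * P.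
    by rewrite /Q -sumS big_distrl.
  by apply: leq_sum => i _; case: (qv_bounds L r (x i) hP).
- have -> : Y + k = \sum_(i < k) ((r * x i) %% P).+1.
    by rewrite /Y sumS.
  have -> : k * P = \sum_(i < k) P by rewrite sum_nat_const card_ord.
  by apply: leq_sum => i _; rewrite ltn_pmod.
Qed.

Lemma complete k P L r (x : 'I_k -> nat) (g : int) : 0 < k -> 0 < P ->
  (\sum_(i < k) (Posz (x i)))%R = g ->
  accept k P L g (\sum_(i < k) qv P L r (x i)) r.
Proof.
move=> hk hP hg.
have [h1 [h2 h3]] := sum_bounds L r x hP.
set Y := \sum_(i < k) (r * x i) %% P in h1 h2 h3.
set Q := \sum_(i < k) qv P L r (x i) in h1 h2.
have hz : absz (((Posz r) * g) %% (Posz P))%Z = Y %% P.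
  rewrite -hg -(big_morph Posz PoszD (erefl (Posz 0))) -PoszM modz_nat /=.
  by rewrite /Y modn_summ big_distrr.
have hj : Y %/ P < k by rewrite ltn_divLR //; lia.
apply/existsP; exists (Ordinal hj) => /=.
rewrite hz addnC -divn_eq -/Q; apply/andP; split => //; lia.
Qed.

Lemma case_lem (e t m : int) (P L k : nat) : e = (t + m * (Posz P))%R -> (0 <= t)%R -> (t < Posz P)%R ->
  (`|e| * (Posz L) < Posz (k*P))%R -> 0 < L ->
  ((t * (Posz L) < Posz (k*P)) \/ (((Posz P) - t)* (Posz L) < Posz (k*P)))%R.
Proof. move=> H1 H2 H3 H4 H5.
have [hm|hm] := lerP 0 m; [left|right]; nia. Qed.

Lemma sound k P L r (x : 'I_k -> nat) (g : int) : 0 < k -> 0 < P -> 0 < L ->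
  accept k P L g (\sum_(i < k) qv P L r (x i)) r ->
  let t := (((Posz r) * ((\sum_(i < k) (Posz (x i))) - g)%R) %% (Posz P))%Z in
  (t * (Posz L) < (Posz (k * P)) \/ ((Posz P) - t) * (Posz L) < (Posz (k * P)))%R.
Proof.
move=> hk hP hL /existsP [j /andP [c1 c2]].
have [h1 [h2 h3]] := sum_bounds L r x hP.
set Y := \sum_(i < k) (r * x i) %% P in h1 h2 h3.
set Q := \sum_(i < k) qv P L r (x i) in h1 h2 c1 c2.
set S := \sum_(i < k) x i.
have hS : (\sum_(i < k) (Posz (x i)))%R = (Posz S) by rewrite (big_morph Posz PoszD (erefl (Posz 0))).
rewrite hS. set t := (_ %% _)%Z.
set z := absz _ in c1 c2.
have hP0 : ((Posz P) != 0)%R by rewrite eqz_nat -lt0n.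
have hz : ((Posz z) = ((Posz r) * g) %% (Posz P))%Z by rewrite /z gez0_abs // modz_ge0.
have hYS : Y %% P = (r * S) %% P by rewrite /Y /S modn_summ big_distrr.
have E1 := divn_eq Y P. have E2 := divn_eq (r * S) P.
have E3 := divz_eq ((Posz r) * g)%R (Posz P).
have E4 := divz_eq ((Posz r) * ((Posz S) - g))%R (Posz P).
have t0 : (0 <= t)%R by rewrite modz_ge0.
have t1 : (t < (Posz P))%R by rewrite ltz_pmod // ltz_nat.
set e : int := ((Posz Y) - (Posz z) - (Posz (j * P)))%R.
have He : (`|e| * (Posz L) < (Posz (k * P)))%R.
  rewrite /e; lia.
set m : int := ((Posz (Y %/ P)) - (Posz ((r * S) %/ P)) + (((Posz r) * g) %/ (Posz P))%Z - (Posz j) + (((Posz r) * ((Posz S) - g)) %/ (Posz P))%Z)%R.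
have Hm : e = (t + m * (Posz P))%R.
  rewrite /e /m /t; lia.
exact: case_lem Hm t0 t1 He hL.
Qed.

Definition tfun (P : nat) (D : int) (r : nat) : nat := absz ((Posz r * D)%R %% Posz P)%Z.

Lemma tinj P D r1 r2 : prime P -> ~~ (P %| absz D) -> r1 < P -> r2 < P ->
  tfun P D r1 = tfun P D r2 -> r1 = r2.
Proof.
move=> pP nd h1 h2; rewrite /tfun.
have hP0 : (Posz P != 0)%R by rewrite eqz_nat; case: P pP {nd h1 h2}.
move=> /(congr1 Posz); rewrite !gez0_abs ?modz_ge0 // => /eqP.
rewrite eqz_mod_dvd -mulrBl Gauss_dvdzl; last first.
  have hc : coprime P (absz D) by rewrite prime_coprime.
  exact: hc.

rewrite dvdzE /= => hd.
have : absz (Posz r1 - Posz r2)%R < P by lia.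
have [h0|hnz] := eqVneq (absz (Posz r1 - Posz r2)%R) 0; first by lia.
by have := dvdn_leq (_ : 0 < _) hd; rewrite lt0n hnz => /(_ isT); lia.
Qed.

Definition s2 k P L := iota 0 (k * P %/ L + 1) ++ [seq P - i | i <- iota 0 (k * P %/ L + 1)].

Lemma mem_s2 k P L (t : int) : 0 < L -> (0 <= t)%R -> (t < Posz P)%R ->
  ((t * (Posz L) < Posz (k*P)) \/ (((Posz P) - t)* (Posz L) < Posz (k*P)))%R ->
  absz t \in s2 k P L.
Proof.
move=> hL t0 t1 [h|h]; rewrite mem_cat; apply/orP; [left|right].
  rewrite mem_iota add0n addn1 ltnS leq_divRL //; lia.
apply/mapP; exists (P - absz t); last by lia.
rewrite mem_iota add0n addn1 ltnS leq_divRL //; lia.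
Qed.

Lemma count_A k P L D (A : {set 'I_(P.-1).+1}) : prime P -> ~~ (P %| absz D) ->
  (forall r, r \in A -> tfun P D r \in s2 k P L) -> #|A| <= 2 * (k * P %/ L + 1).
Proof.
move=> pP nd hA.
have hP : (P.-1).+1 = P by rewrite prednK // prime_gt0.
rewrite cardE -(size_map (fun r : 'I_(P.-1).+1 => tfun P D r)).
have -> : 2 * (k * P %/ L + 1) = size (s2 k P L) by rewrite size_cat size_map size_iota; lia.
apply: uniq_leq_size.
  rewrite map_inj_in_uniq ?enum_uniq // => r1 r2 _ _ /(tinj pP nd) h.
  by apply: val_inj; apply: h; apply: leq_trans (ltn_ord _) _; rewrite hP.
by move=> y /mapP [r]; rewrite mem_enum => /hA ? ->.
Qed.

Definition mkP k P l (g : int) : protocol k :=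
  @Protocol k P.-1 (fun i x r => enc l (qv P (2 ^ l) r x))
    (fun ms r => accept k P (2 ^ l) g (\sum_(i < k) dec (ms i)) r).

Lemma run_eq k P l g x r : 0 < P ->
  @run k (mkP k P l g) x r = accept k P (2 ^ l) g (\sum_(i < k) qv P (2 ^ l) r (x i)) r.
Proof.
move=> hP; rewrite /run /=; congr accept; apply: eq_bigr => i _.
by rewrite dec_enc // qv_lt // expn_gt0.
Qed.

Lemma card_bad k n P l g (x : 'I_k -> nat) : 0 < k -> prime P ->
  k * 2 ^ n + absz g < P -> valid_input n x ->
  #|[set r : 'I_(P.-1).+1 | @run k (mkP k P l g) x r != sum_equal g x]|
    <= 2 * (k * P %/ 2 ^ l + 1).
Proof.
move=> hk pP hPb hx.
have hP : 0 < P := prime_gt0 pP.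
have hL : 0 < 2 ^ l by rewrite expn_gt0.
rewrite /sum_equal; case: eqP => hg.
  rewrite (_ : [set _ | _] = set0) ?cards0 //; apply/setP => r.
  by rewrite !inE run_eq // (complete _ _ hk hP hg).
set D := ((\sum_(i < k) Posz (x i)) - g)%R.
set S := \sum_(i < k) x i.
have hS : (\sum_(i < k) Posz (x i))%R = Posz S by rewrite (big_morph Posz PoszD (erefl (Posz 0))).
have hSb : S + k <= k * 2 ^ n.
  rewrite /S -sumS; have -> : k * 2 ^ n = \sum_(i < k) 2 ^ n by rewrite sum_nat_const card_ord.
  by apply: leq_sum => i _; apply: hx.
have hD0 : D != 0%R by rewrite /D subr_eq0; apply/eqP.
have hDP : absz D < P by rewrite /D hS; lia.
have nd : ~~ (P %| absz D).
  apply/negP => /(dvdn_leq _) h.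
  have : 0 < absz D by rewrite absz_gt0.
  by move=> /h; rewrite leqNgt hDP.
apply: count_A pP nd _ => r; rewrite inE run_eq // eqbF_neg negbK => hr.
have := sound hk hP hL hr.
rewrite -/D => hdisj.
rewrite /tfun; apply: mem_s2 hL _ _ hdisj.
  by rewrite modz_ge0 // eqz_nat -lt0n.
by rewrite ltz_pmod // ltz_nat.
Qed.

Module RealAux.
Local Open Scope R_scope.


Lemma INR_muln m n : INR (m * n)%N = (INR m * INR n).
Proof. exact: mult_INR. Qed.

Lemma INR_exp2 l : INR (2 ^ l)%N%N = 2 ^ l.
Proof.
elim: l => [|l IH]; first by rewrite expn0 /=.
by rewrite expnS INR_muln IH /=.
Qed.

Lemma INR_leq m n : (m <= n)%N -> (INR m <= INR n).
Proof. by move=> /leP; apply: le_INR. Qed.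

Lemma choose_l (k : nat) (eps : R) : (0 < k)%N -> (0 < eps) -> (eps < 1) ->
  exists l, (4 * INR k <= eps * INR (2 ^ l)%N) /\ (INR l <= log2 (INR k / eps) + 3).
Proof.
move=> hk he0 he1.
have hk' : (1 <= INR k) by apply: (INR_leq hk).
pose p l := if Rle_dec (4 * INR k) (eps * INR (2 ^ l)%N) then true else false.
have ex : exists l, p l.
  have [N hN] := INR_archimed eps (4 * INR k) he0.
  exists N; rewrite /p; case: Rle_dec => // hn; exfalso; apply: hn.
  have : (INR N <= INR (2 ^ N)%N) by apply: INR_leq; apply: ltnW; apply: ltn_expl.
  nra.
case: (ex_minnP ex) => l hl hmin.
exists l; split; first by move: hl; rewrite /p; case: Rle_dec.
case: l hl hmin => [|l'] hl hmin.
  by move: hl; rewrite /p; case: Rle_dec => //; rewrite expn0 /=; lra.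
have hl' : (eps * INR (2 ^ l')%N < 4 * INR k).
  have : ~~ p l' by apply/negP => /hmin; rewrite ltnn.
  by rewrite /p; case: Rle_dec => // h _; lra.
rewrite INR_exp2 in hl'.
have h2 : (0 < 2 ^ l') by apply: pow_lt; lra.
have hln : (ln (2 ^ l') < ln (4 * INR k / eps)).
  apply: ln_increasing => //.
  apply: (Rmult_lt_reg_r eps) => //; field_simplify; lra.
rewrite ln_pow in hln; last lra.
have e4 : (4 * INR k / eps = 2 * 2 * (INR k / eps)) by field; lra.
have hke : (0 < INR k / eps) by apply: Rdiv_lt_0_compat; lra.
rewrite e4 ln_mult in hln; [|lra|exact hke].
rewrite ln_mult in hln; try lra.


have ln2 : (0 < ln 2) by have := ln_lt_2; lra.
rewrite S_INR /log2.
apply: (Rmult_le_reg_r (ln 2)) => //.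
have -> : (ln (INR k / eps) / ln 2 + 3) * ln 2 = ln (INR k / eps) + 3 * ln 2 by field; lra.
lra.
Qed.

End RealAux.
Import RealAux.

Theorem mainTheorem11 :
  exists C : R,
  forall (k n : nat), 0 < k -> 0 < n ->
  forall eps : R, Rlt 0 eps -> Rlt eps 1 ->
  forall g : int,
  exists P : protocol k,
    error_at_most n g P eps /\
    comm_at_most n P
      (Rplus (Rmult (INR k) (log2 (Rdiv (INR k) eps))) (Rmult C (INR k))).
Proof.
exists (INR 3); move=> k n hk _ eps he0 he1 g.
have [l [hl1 hl2]] := choose_l hk he0 he1.
have [N2 hN2] := INR_archimed eps 4 he0.
have [P hPb pP] := prime_above (maxn (k * 2 ^ n + absz g) N2).
have hP : 0 < P := prime_gt0 pP.
have hPg : k * 2 ^ n + absz g < P by apply: leq_ltn_trans hPb; apply: leq_maxl.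
have hPN : N2 <= P by apply: ltnW; apply: leq_ltn_trans hPb; apply: leq_maxr.
exists (mkP k P l g); split.
- move=> x hx; rewrite /error_prob.
  change (rand_size (mkP k P l g)) with P.-1.
  have hc := card_bad l hk pP hPg hx.
  set a := #|_| in hc *.
  rewrite prednK //.
  have hdiv := leq_divM (k * P) (2 ^ l).
  have hL : 0 < 2 ^ l by rewrite expn_gt0.
  have haL : a * 2 ^ l <= 2 * (k * P) + 2 * 2 ^ l.
    have := leq_mul2r (2 ^ l) a (2 * (k * P %/ 2 ^ l + 1)); rewrite hc orbT => h.
    move: h; rewrite mulnDr mulnDl muln1 -mulnA; lia.
  move/INR_leq: haL; rewrite !INR_muln plus_INR !INR_muln => haL.
  move/INR_leq: hPN => hPN.
  have hLr : (Rlt 0 (INR (2 ^ l))) by apply: lt_0_INR; apply/ltP.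
  have hPr : (Rlt 0 (INR P)) by apply: lt_0_INR; apply/ltP.
  have hPe : (Rle 4 (Rmult eps (INR P))) by nra.
  have : (Rle (INR a) (Rmult eps (INR P))).
    apply: (Rmult_le_reg_r (INR (2 ^ l))) => //.
    simpl (INR 2) in haL. nra.
  move=> h; apply: (Rmult_le_reg_r (INR P)) => //.
  rewrite /Rdiv Rmult_assoc Rinv_l; last lra.
  lra.
- move=> x r hx; rewrite /total_bits /=.
  under eq_bigr => i _ do rewrite size_enc.
  rewrite sum_nat_const card_ord INR_muln.
  have hk0 : (Rle 0 (INR k)) by apply: pos_INR.
  simpl (INR 3). nra.
Qed.
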